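(* Let $S_2=\mathrm{span}\langle e,f\rangle$ be the two-dimensional Lie triple system with $[e,f,e]=2e$, $[e,f,f]=-2f$, over a field of characteristic zero, and let $U(S_2)$ be its universal enveloping algebra. Then for all $n\ge 0$, $$(e^n,f,f)\,e=n\,e^nf-n(n-1)\,e^{n-1},$$ where $(x,y,z)=(xy)z-x(yz)$ and $e^nf$ denotes the product of $e^n$ with $f$.
   Context: A Lie triple system (L.t.s.) is a vector space $T$ with a trilinear product $[x,y,z]$ satisfying $[x,x,y]=0$, $[x,y,z]+[y,z,x]+[z,x,y]=0$, and $[a,b,[x,y,z]]=[[a,b,x],y,z]+[x,[a,b,y],z]+[x,y,[a,b,z]]$; the product on $S_2$ is determined by the given values together with these identities. For a unital nonassociative algebra $A$, $\mathrm{LN_{alt}}(A)=\{a\in A : (a,x,y)=-(x,a,y)\ \forall x,y\in A\}$ is an L.t.s. with $[a,b,c]=a(bc)-b(ac)-c(ab)+c(ba)$. The universal enveloping algebra $U(T)$ is the unital algebra with an L.t.s. monomorphism $T\to\mathrm{LN_{alt}}(U(T))$ (elements of $T$ identified with their images) such that $ab=ba$ for $a,b\in T$, universal for L.t.s. homomorphisms into $\mathrm{LN_{alt}}(A)$ with this commutation property. For $c\in T$ the subalgebra generated by $c$ is associative, so $c^n$ is well defined ($c^0=1$); for $n=0$ the term $n(n-1)e^{n-1}$ is $0$. *)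

(* Defs.v *)
From HB Require Import structures.
From mathcomp Require Import all_boot all_order all_algebra.
Set Implicit Arguments. Unset Strict Implicit. Unset Printing Implicit Defensive.
Import GRing.Theory.
Local Open Scope ring_scope.

Record NAlg (K : fieldType) := {
  carrier :> lmodType K;
  amul : carrier -> carrier -> carrier;
  aone : carrier;
  amulDl : forall x y z, amul (x + y) z = amul x z + amul y z;
  amulDr : forall x y z, amul x (y + z) = amul x y + amul x z;
  amulZl : forall (a : K) x y, amul (a *: x) y = a *: amul x y;
  amulZr : forall (a : K) x y, amul x (a *: y) = a *: amul x y;
  amul1l : forall x, amul aone x = x;
  amul1r : forall x, amul x aone = x
}.
Arguments amul {K} _ _ _.
Arguments aone {K} _.

Section Ops.
Variables (K : fieldType) (A : NAlg K).
Local Notation "x ** y" := (amul A x y) (at level 40, left associativity).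

Definition assoc (x y z : A) : A := (x ** y) ** z - x ** (y ** z).

Definition in_LNalt (a : A) : Prop :=
  forall x y : A, assoc a x y = - assoc x a y.

Definition ltp (a b c : A) : A :=
  a ** (b ** c) - b ** (a ** c) - c ** (a ** b) + c ** (b ** a).

Definition apow (c : A) (n : nat) : A := iter n (amul A c) (aone A).

End Ops.

(* The Lie triple system S_2 = span<e,f>, modelled as K * K with
   e = (1,0), f = (0,1).  The trilinear product determined by
   [e,f,e] = 2e, [e,f,f] = -2f and the L.t.s. identities is
   [x,y,z] = 2 (x1 y2 - x2 y1) (z1 e - z2 f). *)
Definition S2 (K : fieldType) := (K * K)%type.
Definition S2br (K : fieldType) (x y z : S2 K) : S2 K :=
  let d := 2 * (x.1 * y.2 - x.2 * y.1) in (d * z.1, - (d * z.2)).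

Definition S2map (K : fieldType) (A : NAlg K) (a b : A) (x : S2 K) : A :=
  x.1 *: a + x.2 *: b.

(* (a,b) are the images of (e,f) under an L.t.s. homomorphism
   S_2 -> LN_alt(A) whose image consists of pairwise commuting elements *)
Definition S2hom (K : fieldType) (A : NAlg K) (a b : A) : Prop :=
  [/\ forall x, in_LNalt (S2map a b x),
      forall x y z, S2map a b (S2br x y z)
                    = ltp (S2map a b x) (S2map a b y) (S2map a b z)
    & forall x y, amul A (S2map a b x) (S2map a b y)
                  = amul A (S2map a b y) (S2map a b x)].

Definition is_alg_hom (K : fieldType) (A B : NAlg K) (h : A -> B) : Prop :=
  [/\ forall (k : K) x y, h (k *: x + y) = k *: h x + h y,
      forall x y, h (amul A x y) = amul B (h x) (h y)
    & h (aone A) = aone B].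

(* (U, e, f) is a universal enveloping algebra of S_2, with e, f the images
   of the basis vectors e, f: the map S_2 -> U is an injective L.t.s.
   homomorphism into LN_alt(U) with commuting image, universal among all
   such maps into unital algebras. *)
Definition is_UEA_S2 (K : fieldType) (U : NAlg K) (e f : U) : Prop :=
  [/\ S2hom e f,
      injective (S2map e f)
    & forall (A : NAlg K) (a b : A), S2hom a b ->
        (exists h : U -> A, [/\ is_alg_hom h, h e = a & h f = b]) /\
        (forall h h' : U -> A,
            is_alg_hom h -> h e = a -> h f = b ->
            is_alg_hom h' -> h' e = a -> h' f = b ->
            forall u, h u = h' u)].

(* Main.v *)
Require Import Defs.
From HB Require Import structures.
From mathcomp Require Import all_boot all_order all_algebra.
From mathcomp Require Import ring.
Set Implicit Arguments. Unset Strict Implicit. Unset Printing Implicit Defensive.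
Import GRing.Theory.
Local Open Scope ring_scope.

Section Lin.
Variables (K : fieldType) (V : lmodType K).
Definition phi (vs : V*V*V*V*V*V*V*V) a1 a2 a3 a4 a5 a6 a7 a8 : V :=
  let '(v1,v2,v3,v4,v5,v6,v7,v8) := vs in a1*:v1 + a2*:v2 + a3*:v3 + a4*:v4 + a5*:v5 + a6*:v6 + a7*:v7 + a8*:v8.
Lemma phiD vs a1 a2 a3 a4 a5 a6 a7 a8 b1 b2 b3 b4 b5 b6 b7 b8 :
  phi vs a1 a2 a3 a4 a5 a6 a7 a8 + phi vs b1 b2 b3 b4 b5 b6 b7 b8 = phi vs (a1+b1) (a2+b2) (a3+b3) (a4+b4) (a5+b5) (a6+b6) (a7+b7) (a8+b8).
Proof. case: vs => [[[[[[[v1 v2] v3] v4] v5] v6] v7] v8] /=. rewrite !scalerDl.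
by do 7 (rewrite addrACA; congr (_ + _)).
Qed.
Lemma phiN vs a1 a2 a3 a4 a5 a6 a7 a8 :
  - phi vs a1 a2 a3 a4 a5 a6 a7 a8 = phi vs (-a1) (-a2) (-a3) (-a4) (-a5) (-a6) (-a7) (-a8).
Proof. case: vs => [[[[[[[v1 v2] v3] v4] v5] v6] v7] v8] /=. by rewrite !opprD !scaleNr. Qed.
Lemma phiMn vs a1 a2 a3 a4 a5 a6 a7 a8 n :
  phi vs a1 a2 a3 a4 a5 a6 a7 a8 *+ n = phi vs (a1*+n) (a2*+n) (a3*+n) (a4*+n) (a5*+n) (a6*+n) (a7*+n) (a8*+n).
Proof. case: vs => [[[[[[[v1 v2] v3] v4] v5] v6] v7] v8] /=. by rewrite !mulrnDl !scalerMnl. Qed.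
Lemma phiZ vs a1 a2 a3 a4 a5 a6 a7 a8 k :
  k *: phi vs a1 a2 a3 a4 a5 a6 a7 a8 = phi vs (k*a1) (k*a2) (k*a3) (k*a4) (k*a5) (k*a6) (k*a7) (k*a8).
Proof. case: vs => [[[[[[[v1 v2] v3] v4] v5] v6] v7] v8] /=. by rewrite !scalerDr !scalerA. Qed.
Lemma phi0 vs : 0 = phi vs 0 0 0 0 0 0 0 0.
Proof. case: vs => [[[[[[[v1 v2] v3] v4] v5] v6] v7] v8] /=. by rewrite !scale0r !addr0. Qed.
Lemma at1 v1 v2 v3 v4 v5 v6 v7 v8 : v1 = phi (v1,v2,v3,v4,v5,v6,v7,v8) 1 0 0 0 0 0 0 0.
Proof. by rewrite /= scale1r !scale0r ?addr0 ?add0r. Qed.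
Lemma at2 v1 v2 v3 v4 v5 v6 v7 v8 : v2 = phi (v1,v2,v3,v4,v5,v6,v7,v8) 0 1 0 0 0 0 0 0.
Proof. by rewrite /= scale1r !scale0r ?addr0 ?add0r. Qed.
Lemma at3 v1 v2 v3 v4 v5 v6 v7 v8 : v3 = phi (v1,v2,v3,v4,v5,v6,v7,v8) 0 0 1 0 0 0 0 0.
Proof. by rewrite /= scale1r !scale0r ?addr0 ?add0r. Qed.
Lemma at4 v1 v2 v3 v4 v5 v6 v7 v8 : v4 = phi (v1,v2,v3,v4,v5,v6,v7,v8) 0 0 0 1 0 0 0 0.
Proof. by rewrite /= scale1r !scale0r ?addr0 ?add0r. Qed.
Lemma at5 v1 v2 v3 v4 v5 v6 v7 v8 : v5 = phi (v1,v2,v3,v4,v5,v6,v7,v8) 0 0 0 0 1 0 0 0.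
Proof. by rewrite /= scale1r !scale0r ?addr0 ?add0r. Qed.
Lemma at6 v1 v2 v3 v4 v5 v6 v7 v8 : v6 = phi (v1,v2,v3,v4,v5,v6,v7,v8) 0 0 0 0 0 1 0 0.
Proof. by rewrite /= scale1r !scale0r ?addr0 ?add0r. Qed.
Lemma at7 v1 v2 v3 v4 v5 v6 v7 v8 : v7 = phi (v1,v2,v3,v4,v5,v6,v7,v8) 0 0 0 0 0 0 1 0.
Proof. by rewrite /= scale1r !scale0r ?addr0 ?add0r. Qed.
Lemma at8 v1 v2 v3 v4 v5 v6 v7 v8 : v8 = phi (v1,v2,v3,v4,v5,v6,v7,v8) 0 0 0 0 0 0 0 1.
Proof. by rewrite /= scale1r !scale0r ?addr0 ?add0r. Qed.
End Lin.

Ltac lin x1 x2 x3 x4 x5 x6 x7 x8 :=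
  let vs := fresh "vs" in
  pose vs := (x1, x2, x3, x4, x5, x6, x7, x8);
  lazymatch x1 with 0%R => idtac | _ => try (rewrite (at1 x1 x2 x3 x4 x5 x6 x7 x8) -/vs) end;
  lazymatch x2 with 0%R => idtac | _ => try (rewrite (at2 x1 x2 x3 x4 x5 x6 x7 x8) -/vs) end;
  lazymatch x3 with 0%R => idtac | _ => try (rewrite (at3 x1 x2 x3 x4 x5 x6 x7 x8) -/vs) end;
  lazymatch x4 with 0%R => idtac | _ => try (rewrite (at4 x1 x2 x3 x4 x5 x6 x7 x8) -/vs) end;
  lazymatch x5 with 0%R => idtac | _ => try (rewrite (at5 x1 x2 x3 x4 x5 x6 x7 x8) -/vs) end;
  lazymatch x6 with 0%R => idtac | _ => try (rewrite (at6 x1 x2 x3 x4 x5 x6 x7 x8) -/vs) end;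
  lazymatch x7 with 0%R => idtac | _ => try (rewrite (at7 x1 x2 x3 x4 x5 x6 x7 x8) -/vs) end;
  lazymatch x8 with 0%R => idtac | _ => try (rewrite (at8 x1 x2 x3 x4 x5 x6 x7 x8) -/vs) end;
  rewrite ?(phi0 vs) ?(phiN, phiMn, phiZ, phiD);
  f_equal; ring.
Section LC.
Variables (K : fieldType) (V : lmodType K).
Lemma lc1 (x y a1 b1 : V) (c1 : K) : a1 = b1 ->
  x - y = c1 *: (a1 - b1) -> x = y.
Proof. move=> -> H; apply/eqP; by rewrite -subr_eq0 H subrr scaler0. Qed.
Lemma lc2 (x y a1 b1 a2 b2 : V) (c1 c2 : K) : a1 = b1 -> a2 = b2 ->
  x - y = c1 *: (a1 - b1) + c2 *: (a2 - b2) -> x = y.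
Proof. move=> -> -> H; apply/eqP; by rewrite -subr_eq0 H !subrr !scaler0 addr0. Qed.
Lemma lc4 (x y a1 b1 a2 b2 a3 b3 a4 b4 : V) (c1 c2 c3 c4 : K) :
  a1 = b1 -> a2 = b2 -> a3 = b3 -> a4 = b4 ->
  x - y = c1 *: (a1 - b1) + c2 *: (a2 - b2) + c3 *: (a3 - b3) + c4 *: (a4 - b4) -> x = y.
Proof. move=> -> -> -> -> H; apply/eqP; by rewrite -subr_eq0 H !subrr !scaler0 !addr0. Qed.
End LC.

Section Main.
Variables (K : fieldType) (U : NAlg K).
Local Notation "x ** y" := (amul U x y) (at level 40, left associativity).

Lemma amulNl (x y : U) : (- x) ** y = - (x ** y).
Proof. by rewrite -scaleN1r amulZl scaleN1r. Qed.
Lemma amulNr (x y : U) : x ** (- y) = - (x ** y).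
Proof. by rewrite -scaleN1r amulZr scaleN1r. Qed.
Lemma amulBl (x y z : U) : (x - y) ** z = x ** z - y ** z.
Proof. by rewrite amulDl amulNl. Qed.
Lemma amulBr (x y z : U) : x ** (y - z) = x ** y - x ** z.
Proof. by rewrite amulDr amulNr. Qed.
Lemma amulMnl (x y : U) n : (x *+ n) ** y = (x ** y) *+ n.
Proof. by rewrite -!scaler_nat amulZl. Qed.
Lemma amulMnr (x y : U) n : x ** (y *+ n) = (x ** y) *+ n.
Proof. by rewrite -!scaler_nat amulZr. Qed.

Variable two : (2 : K) != 0.

Lemma half (x y : U) : x *+ 2 = y *+ 2 -> x = y.
Proof.
move/(congr1 (fun v => (2 : K)^-1 *: v)).
by rewrite -!scaler_nat !scalerA mulVf // !scale1r.
Qed.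

Variables (e f : U).
Hypothesis Ne : forall x y, (e ** x) ** y + (x ** e) ** y = e ** (x ** y) + x ** (e ** y).
Hypothesis Nf : forall x y, (f ** x) ** y + (x ** f) ** y = f ** (x ** y) + x ** (f ** y).
Hypothesis C : e ** f = f ** e.
Hypothesis T1 : e ** (f ** e) - f ** (e ** e) = e *+ 2.
Hypothesis T2 : e ** (f ** f) - f ** (f ** e) = - (f *+ 2).

Definition Lp n (y : U) := iter n (amul U e) y.
Arguments Lp : simpl never.
Local Notation E n := (apow e n).

Lemma LpD n x y : Lp n (x + y) = Lp n x + Lp n y.
Proof. by elim: n => [|n IH] //; rewrite /Lp /= -/(Lp n x) -/(Lp n y) -/(Lp n (x+y)) IH amulDr. Qed.
Lemma LpN n x : Lp n (- x) = - Lp n x.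
Proof. by elim: n => [|n IH] //; rewrite /Lp /= -/(Lp n x) -/(Lp n (-x)) IH amulNr. Qed.
Lemma LpB n x y : Lp n (x - y) = Lp n x - Lp n y.
Proof. by rewrite LpD LpN. Qed.
Lemma LpMn n x k : Lp n (x *+ k) = Lp n x *+ k.
Proof. by elim: n => [|n IH] //; rewrite /Lp /= -/(Lp n x) -/(Lp n (x *+ k)) IH amulMnr. Qed.
Lemma LpS n y : Lp n.+1 y = e ** Lp n y.
Proof. by []. Qed.
Lemma LpSr n y : Lp n.+1 y = Lp n (e ** y).
Proof. by rewrite /Lp iterSr. Qed.
Lemma Lp0 y : Lp 0 y = y.
Proof. by []. Qed.

Lemma powL n y : E n ** y = Lp n y.
Proof.
elim: n y => [|n IH] y; first by rewrite amul1l.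
have He : E n ** e = E n.+1.
  by rewrite IH /apow -/(Lp n.+1 (aone U)) LpSr amul1r.
apply: half; rewrite !mulr2n.
have H := Ne (E n) y; rewrite He in H.
have H2 : e ** E n = E n.+1 by [].
rewrite H2 in H; rewrite H.
rewrite !IH -LpS LpSr //.
Qed.

Lemma powe n : E n ** e = E n.+1.
Proof. by rewrite powL /apow -/(Lp n.+1 (aone U)) LpSr amul1r. Qed.

Definition D y := e ** (f ** y) - f ** (e ** y).

Lemma Dcomm y : D (e ** y) = e ** D y + (e ** y) *+ 2.
Proof.
set W := e ** (e ** f).
have Hfe2 : f ** (e ** e) = W - e *+ 2.
  by rewrite -T1 -C subKr.
have Hefe : (e ** f) ** e = W - e.
  apply: half; have H := Ne f e; rewrite -C -/W Hfe2 in H.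
  apply: (@lc1 K U _ _ _ _ 1 H); lin W ((e ** f) ** e) e (0:U) (0:U) (0:U) (0:U) (0:U).
have Hd := Nf (E 2) y.
rewrite !powL /Lp /= amul1r Hfe2 in Hd.
rewrite -/W amulBl amulMnl in Hd.
have He := Ne (e ** f) y.
rewrite -/W Hefe amulBl in He.
have Hf z : ((e ** f) ** z) *+ 2 = e ** (f ** z) + f ** (e ** z).
  by rewrite mulr2n {2}C Ne.
have Hf1 := congr1 (amul U e) (Hf y).
rewrite amulMnr amulDr in Hf1.
have Hf2 := Hf (e ** y).
rewrite /D amulBr.
apply: (@lc4 K U _ _ _ _ _ _ _ _ _ _ 2 (-2) (-1) (-1) Hd He Hf1 Hf2).
lin (e ** ((e ** f) ** y)) ((e ** f) ** (e ** y)) (W ** y) (e ** (f ** (e ** y)))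
    (f ** (e ** (e ** y))) (e ** (e ** (f ** y))) (e ** y) (0:U).
Qed.

Lemma fe_swap z : f ** (e ** z) = e ** (f ** z) - D z.
Proof. by rewrite /D subKr. Qed.

Lemma DE n : D (E n) = E n *+ (2 * n).
Proof.
elim: n => [|n IH].
  by rewrite /D /apow /= amul1r amul1r C subrr mulr0n.
have -> : E n.+1 = e ** E n by [].
rewrite Dcomm IH amulMnr.
have -> : e ** E n = E n.+1 by [].
by rewrite -mulrnDr addnC mulnS.
Qed.

Lemma fE m : f ** E m = E m ** f - E m.-1 *+ (m * m.-1).
Proof.
elim: m => [|m IH].
  by rewrite /apow /= amul1r amul1l mulr0n subr0.
transitivity (f ** (e ** E m)); first by [].
rewrite fe_swap IH DE amulBr amulMnr !powL -LpS.
case: m IH => [|m] IH.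
  by rewrite /= !mulr0n !subr0.
have -> : e ** E m = E m.+1 by [].
rewrite -!powL.
rewrite !succnK. apply: (@lc1 K U _ _ _ _ 0 (erefl (0:U))).
lin (E m.+2 ** f) (E m.+1) (0:U) (0:U) (0:U) (0:U) (0:U) (0:U).
Qed.

Lemma Bm m : (E m ** f) ** e = E m.+1 ** f - E m *+ m.
Proof.
apply: half.
have H := Nf (E m) e.
have h1 : E m ** (e ** f) = E m.+1 ** f by rewrite !powL LpSr.
rewrite powe -C h1 !fE amulBl amulMnl in H.
clear h1; case: m H => [|m] H.
  rewrite /= !mulr0n !subr0 in H *.
  by rewrite mulr2n.
rewrite powe !succnK in H.
apply: (@lc1 K U _ _ _ _ 1 H).
lin ((E m.+1 ** f) ** e) (E m.+2 ** f) (E m.+1) (0:U) (0:U) (0:U) (0:U) (0:U).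
Qed.

Lemma DLp k y : D (Lp k y) = Lp k (D y) + Lp k y *+ (2 * k).
Proof.
elim: k => [|k IH]; first by rewrite !Lp0 mulr0n addr0.
rewrite LpS Dcomm IH amulDr amulMnr -!LpS.
by rewrite -addrA -mulrnDr addnC mulnS.
Qed.

Lemma fLp m y : f ** Lp m y = Lp m (f ** y) - Lp m.-1 (D y) *+ m - Lp m.-1 y *+ (m * m.-1).
Proof.
elim: m => [|m IH].
  by rewrite !Lp0 !mulr0n !subr0.
rewrite LpS fe_swap IH DLp !amulBr !amulMnr -!LpS.
case: m IH => [|m] IH.
  by rewrite /= !mulr0n !subr0 addr0 mulr1n.
rewrite !succnK.
apply: (@lc1 K U _ _ _ _ 0 (erefl (0:U))).
lin (Lp m.+2 (f ** y)) (Lp m.+1 (D y)) (Lp m.+1 y) (0:U) (0:U) (0:U) (0:U) (0:U).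
Qed.

Lemma Df : D f = - (f *+ 2).
Proof. by rewrite /D C T2. Qed.

Lemma An n : (E n ** f) ** f - E n ** (f ** f) = (E n.-1 ** f) *+ n.
Proof.
have H := Nf (E n) f.
rewrite fE amulBl amulMnl !powL fLp Df LpN LpMn in H.
rewrite !powL.
apply: half.
apply: (@lc1 K U _ _ _ _ 1 H).
lin ((Lp n f) ** f) (Lp n (f ** f)) (Lp n.-1 f) (0:U) (0:U) (0:U) (0:U) (0:U).
Qed.

Lemma final n : amul U (assoc (E n) f f) e
  = n%:R *: amul U (E n) f - (n * n.-1)%:R *: E n.-1.
Proof.
rewrite /assoc An amulMnl.
case: n => [|n].
  by rewrite mulr0n !scale0r subr0.
rewrite succnK Bm.
apply: (@lc1 K U _ _ _ _ 0 (erefl (0:U))).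
lin (E n.+1 ** f) (E n) (0:U) (0:U) (0:U) (0:U) (0:U) (0:U).
Qed.
End Main.

Theorem mainTheorem5 (K : fieldType) (charK0 : [pchar K] =i pred0)
    (U : NAlg K) (e f : U) (HU : is_UEA_S2 e f) (n : nat) :
  amul U (assoc (apow e n) f f) e
  = n%:R *: amul U (apow e n) f - (n * n.-1)%:R *: apow e n.-1.
Proof.
have two : (2 : K) != 0.
  apply/negP => /natf0_pchar [//|p Hp].
  by rewrite charK0 in Hp.
case: HU => [[Hln Hbr Hcom] _ _].
have Se : S2map e f (1, 0) = e by rewrite /S2map /= scale1r scale0r addr0.
have Sf : S2map e f (0, 1) = f by rewrite /S2map /= scale1r scale0r add0r.
have Nrm (a : U) : in_LNalt a -> forall x y,
    amul U (amul U a x) y + amul U (amul U x a) y = amul U a (amul U x y) + amul U x (amul U a y).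
  move=> Ha x y; have := Ha x y; rewrite /assoc => H.
  apply/eqP; rewrite -subr_eq0 opprD addrACA.
  rewrite [X in X + _](_ : _ = amul U (amul U a x) y - amul U a (amul U x y)) //.
  by rewrite H addrC subrr.
have Ne := Nrm e (ltac:(rewrite -Se; exact: Hln)).
have Nf := Nrm f (ltac:(rewrite -Sf; exact: Hln)).
have C : amul U e f = amul U f e by have := Hcom (1,0) (0,1); rewrite Se Sf.
have T1 : amul U e (amul U f e) - amul U f (amul U e e) = e *+ 2.
  have := Hbr (1,0) (0,1) (1,0); rewrite Se Sf /ltp C subrK => <-.
  by rewrite /S2br /S2map /= !mulr1 !mulr0 subr0 mulr1 oppr0 scale0r addr0 -scaler_nat.
have T2 : amul U e (amul U f f) - amul U f (amul U f e) = - (f *+ 2).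
  have := Hbr (1,0) (0,1) (0,1); rewrite Se Sf /ltp C subrK => <-.
  by rewrite /S2br /S2map /= !mulr1 !mulr0 subr0 !mulr1 scale0r add0r scaleNr -scaler_nat.
exact: (final two Ne Nf C T1 T2).
Qed.
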